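(* Let $V$ be a Lie superalgebra over $k$ such that for every ideal $W$ of $V$ the centre $Z(W)=\{w\in W:[w,W]=0\}$ is zero. Let $\mathcal A=\mathrm{Curr}(V)$. Then $\sigma(V)\subseteq V$ for every automorphism $\sigma$ of the $k$-conformal superalgebra $\mathcal A$ (where $V$ is identified with $1\otimes V\subseteq\mathcal A$).
   Context: Let $k$ be a field of characteristic $0$. A $k$-conformal superalgebra is a $\mathbb Z/2\mathbb Z$-graded $k$-space $\mathcal A$ with an even linear map $\partial_{\mathcal A}$ and bilinear products $a_{(n)}b$ ($n\in\mathbb Z_+$) with $a_{(n)}b=0$ for $n\gg0$, $(\partial_{\mathcal A}a)_{(n)}b=-na_{(n-1)}b$, $a_{(n)}\partial_{\mathcal A}b=\partial_{\mathcal A}(a_{(n)}b)+na_{(n-1)}b$; an automorphism is a bijective even linear map preserving all $n$-products and commuting with $\partial_{\mathcal A}$. The current conformal superalgebra of a Lie superalgebra $V$ is $\mathrm{Curr}(V)=k[\partial]\otimes_kV$, with $\partial_{\mathcal A}$ acting by multiplication by $\partial$, grading from $V$, and $n$-products determined by $v_{(0)}w=[v,w]$ and $v_{(n)}w=0$ for $n\ge1$ ($v,w\in V$), extended to all of $k[\partial]\otimes V$ via the axiom (CS1) above (equivalently $\lambda$-bracket $[p(\partial)v_\lambda q(\partial)w]=p(-\lambda)q(\partial+\lambda)[v,w]$). *)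

(* Defs.v *)
From HB Require Import structures.
From mathcomp Require Import all_boot all_order all_algebra.
Set Implicit Arguments. Unset Strict Implicit. Unset Printing Implicit Defensive.
Import GRing.Theory.
Local Open Scope ring_scope.

Section LieSuper.
Variables (K : fieldType) (V : lmodType K).

(* Z/2-grading of V given by the (linear, idempotent) projection pi0 onto V_0
   along V_1; parity [false] = even, [true] = odd. *)
Definition homog (pi0 : V -> V) (b : bool) (x : V) : Prop :=
  pi0 x = (if b then 0 else x).

Definition sgn (b : bool) : K := (-1) ^+ b.

Record is_lie_superalgebra (pi0 : V -> V) (br : V -> V -> V) : Prop := {
  pi0_lin : forall (a : K) x y, pi0 (a *: x + y) = a *: pi0 x + pi0 y;
  pi0_idem : forall x, pi0 (pi0 x) = pi0 x;
  br_linl : forall (a : K) x y z, br (a *: x + y) z = a *: br x z + br y z;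
  br_linr : forall (a : K) x y z, br z (a *: x + y) = a *: br z x + br z y;
  br_homog : forall i j x y, homog pi0 i x -> homog pi0 j y ->
     homog pi0 (i (+) j) (br x y);
  br_skew : forall i j x y, homog pi0 i x -> homog pi0 j y ->
     br x y = - (sgn (i && j) *: br y x);
  br_jacobi : forall i j x y z, homog pi0 i x -> homog pi0 j y ->
     br x (br y z) = br (br x y) z + sgn (i && j) *: br y (br x z)
}.

Definition is_ideal (pi0 : V -> V) (br : V -> V -> V) (W : V -> Prop) : Prop :=
  [/\ W 0, (forall (a : K) x y, W x -> W y -> W (a *: x + y)),
      (forall x, W x -> W (pi0 x)) & (forall v w, W w -> W (br v w))].

Definition centre_trivial (br : V -> V -> V) (W : V -> Prop) : Prop :=
  forall w, W w -> (forall w', W w' -> br w w' = 0) -> w = 0.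

(* ---- The current conformal superalgebra Curr(V) = k[d] (x) V.
   An element sum_m d^m (x) f m is encoded by its finitely supported
   coefficient function f : nat -> V. *)
Definition finsupp (f : nat -> V) : Prop :=
  exists N, forall m, (N <= m)%N -> f m = 0.

Definition cemb (v : V) : nat -> V := fun m => if m is 0 then v else 0.

Definition cder (f : nat -> V) : nat -> V :=
  fun m => if m is m'.+1 then f m' else 0.

Definition chomog (pi0 : V -> V) (b : bool) (f : nat -> V) : Prop :=
  forall m, homog pi0 b (f m).

(* n-th product: from [d^i a _lambda d^j b] = (-lambda)^i (d+lambda)^j [a,b]
   and [a_lambda b] = sum_n lambda^n/n! a_(n) b one gets
   (d^i a)_(n) (d^j b) = n! (-1)^i C(j, n-i) d^(i+j-n) [a,b]  (i <= n). *)
Definition cprod (br : V -> V -> V) (n : nat) (f g : nat -> V) : nat -> V :=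
  fun m => \sum_(i < n.+1)
    ((-1) ^+ i * ((n`! * 'C(m + n - i, n - i))%N)%:R) *: br (f i) (g (m + n - i)%N).

(* sigma (restricted to finitely supported functions, i.e. to Curr(V)) is an
   automorphism of the conformal superalgebra Curr(V). *)
Record curr_aut (pi0 : V -> V) (br : V -> V -> V)
    (sigma : (nat -> V) -> (nat -> V)) : Prop := {
  aut_supp : forall f, finsupp f -> finsupp (sigma f);
  aut_lin : forall (a : K) f g, finsupp f -> finsupp g ->
     sigma (fun m => a *: f m + g m) = (fun m => a *: sigma f m + sigma g m);
  aut_inj : forall f g, finsupp f -> finsupp g -> sigma f = sigma g -> f = g;
  aut_surj : forall g, finsupp g -> exists2 f, finsupp f & sigma f = g;
  aut_even : forall b f, finsupp f -> chomog pi0 b f -> chomog pi0 b (sigma f);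
  aut_der : forall f, finsupp f -> sigma (cder f) = cder (sigma f);
  aut_prod : forall n f g, finsupp f -> finsupp g ->
     sigma (cprod br n f g) = cprod br n (sigma f) (sigma g)
}.

End LieSuper.

(* Main.v *)
Require Import Defs.
From HB Require Import structures.
From mathcomp Require Import all_boot all_order all_algebra.
From Stdlib Require Import FunctionalExtensionality.
Import GRing.Theory.
Local Open Scope ring_scope.

Lemma xxx0 (M : zmodType) (x : M) : x = x + x -> x = 0.
Proof. move=> e; have: x + x - x = x by rewrite addrK. by rewrite -e subrr. Qed.

Theorem mainTheorem12 (K : fieldType) (hK : [pchar K] =i pred0)
  (V : lmodType K) (pi0 : V -> V) (br : V -> V -> V)
  (hV : is_lie_superalgebra pi0 br)
  (hZ : forall W : V -> Prop, is_ideal pi0 br W -> centre_trivial br W)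
  (sigma : (nat -> V) -> (nat -> V)) (hs : curr_aut pi0 br sigma) :
  forall v : V, exists w : V, sigma (cemb v) = cemb w.
Proof.
have br0r : forall z, br z 0 = 0.
  move=> z; apply: (@xxx0 V); have := br_linr hV 1 0 0 z.
  by rewrite !scale1r addr0 => e; exact: e.
have br0l : forall z, br 0 z = 0.
  move=> z; apply: (@xxx0 V); have := br_linl hV 1 0 0 z.
  by rewrite !scale1r addr0 => e; exact: e.
have pi00 : pi0 0 = 0.
  apply: (@xxx0 V); have := pi0_lin hV 1 0 0.
  by rewrite !scale1r addr0 => e; exact: e.
have fs0 : finsupp (fun _ : nat => (0 : V)) by exists 0%N.
have fcemb : forall x : V, finsupp (cemb x) by move=> x; exists 1%N; case.
have sig0 : sigma (fun _ => 0) = fun _ => 0.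
  have := aut_lin hs 1 fs0 fs0.
  have -> : (fun m : nat => 1 *: (0:V) + 0) = fun _ => 0.
    by apply: functional_extensionality => m; rewrite scale1r addr0.
  move=> e; apply: functional_extensionality => m; apply: (@xxx0 V).
  by rewrite {1}e scale1r.
pose a x := sigma (cemb x).
have cemb0 : cemb (0:V) = fun _ => 0 by apply: functional_extensionality; case.
have a0 : forall m, a 0 m = 0 by move=> m; rewrite /a cemb0 sig0.
have aD : forall c x y m, a (c *: x + y) m = c *: a x m + a y m.
  move=> c x y m; rewrite /a.
  have -> : cemb (c *: x + y) = fun m => c *: cemb x m + cemb y m.
    by apply: functional_extensionality; case => //= n; rewrite scaler0 addr0.
  by rewrite (aut_lin hs c (fcemb x) (fcemb y)).
have prod0 : forall x y m, a (br x y) m = br (a x 0%N) (a y m).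
  move=> x y m; rewrite /a.
  have -> : cemb (br x y) = cprod br 0 (cemb x) (cemb y).
    apply: functional_extensionality => k; rewrite /cprod big_ord1 /=.
    rewrite expr0 mul1r fact0 addn0 subn0 bin0 scale1r.
    by case: k => [|k] //=; rewrite br0r.
  rewrite (aut_prod hs 0 (fcemb x) (fcemb y)).
  by rewrite /cprod big_ord1 /= expr0 mul1r fact0 addn0 subn0 bin0 scale1r.
have prodn : forall n x y, cprod br n.+1 (a x) (a y) = fun _ => 0.
  move=> n x y; rewrite /a -(aut_prod hs n.+1 (fcemb x) (fcemb y)) -sig0.
  congr sigma; apply: functional_extensionality => m.
  rewrite /cprod; apply: big1 => -[[|i] Hi] _ /=.
    by rewrite subn0 addnS /= br0r scaler0.
  by rewrite br0l scaler0.
have surj0 : forall v, exists y, a y 0%N = v.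
  move=> v; have [f ff fe] := aut_surj hs (fcemb v).
  have fs : finsupp (fun m => f m.+1).
    by case: ff => N HN; exists N => m Hm; apply: HN; apply: leqW.
  have fd : finsupp (cder (fun m => f m.+1)).
    by case: fs => N HN; exists N.+1; case => // m Hm; apply: HN.
  have Ef : f = fun m => 1 *: cemb (f 0%N) m + cder (fun m => f m.+1) m.
    by apply: functional_extensionality; case => [|m] /=; rewrite scale1r ?addr0 ?add0r.
  exists (f 0%N); rewrite /a.
  have := congr1 (fun g => g 0%N) fe.
  rewrite {1}Ef (aut_lin hs 1 (fcemb _) fd) (aut_der hs fs) /=.
  by rewrite scale1r addr0 => ->.
have piA : forall x m, pi0 (a x m) = a (pi0 x) m.
  move=> x m.
  have ex : x = 1 *: pi0 x + ((-1) *: pi0 x + x).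
    by rewrite scale1r scaleN1r addrA addrN add0r.
  rewrite {1}ex aD (pi0_lin hV) scale1r.
  have e1 : pi0 (a (pi0 x) m) = a (pi0 x) m.
    apply: (aut_even hs (b:=false) (fcemb (pi0 x))).
    by case => [|k]; rewrite /homog /= ?pi00 ?(pi0_idem hV).
  have e2 : pi0 (a ((-1) *: pi0 x + x) m) = 0.
    apply: (aut_even hs (b:=true) (fcemb _)).
    case => [|k]; rewrite /homog /= ?pi00 //.
    by rewrite (pi0_lin hV) (pi0_idem hV) scaleN1r addNr.
  by rewrite e1 e2 addr0.
pose bnd d (g : nat -> V) := forall m, (d < m)%N -> g m = 0.
pose W d z := exists x, bnd d (a x) /\ z = a x d.
have Wid : forall d, is_ideal pi0 br (W d).
  move=> d; split.
  - by exists 0; split => [m _|]; rewrite a0.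
  - move=> c z z' [x [bx ->]] [y [bz ->]]; exists (c *: x + y); split.
      by move=> m hm; rewrite aD bx // bz // scaler0 addr0.
    by rewrite aD.
  - move=> z [x [bx ->]]; exists (pi0 x); split; last by rewrite piA.
    by move=> m hm; rewrite -piA bx.
  - move=> v z [x [bx ->]]; have [y <-] := surj0 v.
    exists (br y x); split; last by rewrite prod0.
    by move=> m hm; rewrite prod0 bx.
have Wab : forall d z z', W d.+1 z -> W d.+1 z' -> br z z' = 0.
  move=> d z z' [x [bx ->]] [y [byy ->]].
  set n := (d.+1 + d.+1)%N.
  have := congr1 (fun g => g 0%N) (prodn (d + d.+1)%N x y) => /=.
  rewrite /cprod (bigD1 (Ordinal (ltn_addr d.+1 (ltnSn d.+1)))) //= big1; last first.
    move=> [i Hi] /= hi.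
    have [lt|gt|eq] := ltngtP i d.+1.
    - rewrite add0n byy ?br0r ?scaler0 //.
      by rewrite -addSn ltn_subRL ltn_add2r.
    - by rewrite bx ?br0l ?scaler0.
    - by move: hi; rewrite -val_eqE /= eq eqxx.
  rewrite addr0 add0n -addSn addnK binn muln1 => e.
  have c0 : ((-1) ^+ d.+1 * ((d.+1 + d.+1)`!)%:R : K) != 0.
    rewrite mulf_neq0 ?signr_eq0 //.
    by move/pcharf0P: hK => ->; rewrite -lt0n fact_gt0.
  by rewrite -[br _ _]scale1r -(mulVf c0) -scalerA e scaler0.
have down : forall d x, bnd d (a x) -> bnd 0%N (a x).
  elim => [|d IH] x bx //; apply: IH => m hm.
  have [->|ne] := eqVneq m d.+1; last by apply: bx; rewrite ltn_neqAle eq_sym ne hm.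
  apply: (hZ _ (Wid d.+1)); first by exists x.
  by move=> w' hw'; apply: (Wab d); first by exists x.
move=> v; exists (a v 0%N).
have [N HN] := aut_supp hs (fcemb v).
have b0 : bnd 0%N (a v) by apply: (down N) => m hm; apply: HN; apply: ltnW.
by apply: functional_extensionality; case => [|m] //=; apply: b0.
Qed.
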